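(* Let $\mathcal{D}[t]\subset\mathcal{H}\subset\mathcal{D}^\times[t^\times]$ be a rigged Hilbert space with $\mathcal{D}[t]$ complete and reflexive, and let $\{\zeta_n\}$ be a sequence in $\mathcal{D}^\times$. If $\{\zeta_n\}$ possesses a biorthogonal sequence $\{\xi_n\}\subset\mathcal{D}$ (i.e. $\langle\zeta_n,\xi_k\rangle=\delta_{n,k}$ for all $n,k$) which is total in $\mathcal{D}$ and Riesz-Fischer-like, then $\{\zeta_n\}$ is a Bessel-like sequence.
   Context: A rigged Hilbert space $\mathcal{D}[t]\subset\mathcal{H}\subset\mathcal{D}^\times[t^\times]$: $\mathcal{D}$ is a dense subspace of the Hilbert space $\mathcal{H}$ with a locally convex topology $t$ finer than the norm topology, $\mathcal{D}^\times$ is the space of continuous conjugate-linear functionals on $\mathcal{D}[t]$ with the strong dual topology $t^\times=\beta(\mathcal{D}^\times,\mathcal{D})$, $\mathcal{H}\subset\mathcal{D}^\times$, and the duality form $\langle\Phi,\eta\rangle$ (value of $\Phi\in\mathcal{D}^\times$ at $\eta\in\mathcal{D}$) extends the inner product. A sequence is total if its linear span is dense in $\mathcal{D}[t]$. $\mathcal{L}(\mathcal{D},\mathcal{D}^\times)$ denotes the continuous linear maps $\mathcal{D}[t]\to\mathcal{D}^\times[t^\times]$. $\mathcal{C}(\mathcal{D},\mathcal{H})$ is the set of $X\in\mathcal{L}(\mathcal{D},\mathcal{D}^\times)$ mapping $\mathcal{D}$ into $\mathcal{H}$ continuously from $\mathcal{D}[t]$ into $\mathcal{H}$. A sequence $\{\xi_n\}\subset\mathcal{D}$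 is Riesz-Fischer-like if for every orthonormal basis $\{e_n\}$ of $\mathcal{H}$ there exists $S\in\mathcal{C}(\mathcal{D},\mathcal{H})$ with $S\xi_n=e_n$ for all $n$. A sequence $\{\zeta_n\}\subset\mathcal{D}^\times$ is Bessel-like if for every bounded subset $\mathcal{M}$ of $\mathcal{D}[t]$, $\sup_{\eta\in\mathcal{M}}\sum_{k=1}^\infty|\langle\zeta_k,\eta\rangle|^2<\infty$. *)

(* Defs.v *)
From HB Require Import structures.
From mathcomp Require Import all_boot all_order all_algebra.
From mathcomp Require Import all_classical all_reals all_analysis.
From mathcomp Require Import complex.
Set Implicit Arguments. Unset Strict Implicit. Unset Printing Implicit Defensive.
Import Order.TTheory GRing.Theory Num.Theory.
Import numFieldTopology.Exports numFieldNormedType.Exports.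
Local Open Scope classical_set_scope.
Local Open Scope ring_scope.

Section Hilbert.
Variables (R : realType) (H : lmodType R[i]) (ip : H -> H -> R[i]).

Definition is_inner_product :=
  [/\ forall (a : R[i]) (x y z : H), ip (a *: x + y) z = a * ip x z + ip y z,
      forall x y : H, ip y x = (ip x y)^*,
      forall x : H, 0 <= ip x x &
      forall x : H, ip x x = 0 -> x = 0].

(* Cauchy / convergent sequences for the norm induced by ip
   (ip x x = ||x||^2, so "ip (u n - u m) (u n - u m) < e" for all e > 0
   is the usual epsilon condition). *)
Definition h_cauchy (u : nat -> H) :=
  forall e : R[i], 0 < e -> exists N : nat, forall n m : nat,
    (N <= n)%N -> (N <= m)%N -> ip (u n - u m) (u n - u m) < e.

Definition h_converges (u : nat -> H) (x : H) :=
  forall e : R[i], 0 < e -> exists N : nat, forall n : nat,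
    (N <= n)%N -> ip (u n - x) (u n - x) < e.

Definition is_hilbert_space :=
  is_inner_product /\ forall u, h_cauchy u -> exists x, h_converges u x.

Definition orthonormal_basis (e : nat -> H) :=
  (forall n m : nat, ip (e n) (e m) = (n == m)%:R) /\
  (forall x : H, (forall n, ip x (e n) = 0) -> x = 0).
End Hilbert.

(* D^x is represented by the functions D -> C that are conjugate-linear  *)
(* and t-continuous; <Phi, eta> is Phi eta.                              *)
Section Rigged.
Variables (R : realType) (D : tvsType R[i]).

Definition tbounded (M : set D) :=
  forall U : set D, nbhs (0 : D) U ->
    exists r : R[i], 0 < r /\
      forall l : R[i], r <= `|l| -> M `<=` [set l *: u | u in U].

Definition conj_linear (f : D -> R[i]) :=
  forall (a : R[i]) (x y : D), f (a *: x + y) = a^* * f x + f y.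

Definition t_continuous_functional (f : D -> R[i]) :=
  forall (x : D) (e : R[i]), 0 < e -> nbhs x (fun y => `|f y - f x| < e).

Definition dual_elt (Phi : D -> R[i]) :=
  conj_linear Phi /\ t_continuous_functional Phi.

Definition sdual_nbhs (Phi0 : D -> R[i]) (V : set (D -> R[i])) :=
  exists (M : set D) (e : R[i]), [/\ tbounded M, 0 < e &
    forall Phi, dual_elt Phi ->
      (forall x, M x -> `|Phi x - Phi0 x| < e) -> V Phi].

Definition sdual_bounded (B : set (D -> R[i])) :=
  B `<=` dual_elt /\
  forall V, sdual_nbhs (fun _ => 0) V ->
    exists r : R[i], 0 < r /\ forall l : R[i], r <= `|l| ->
      B `<=` [set (fun x => l * Psi x) | Psi in V].

Definition bidual_elt (F : (D -> R[i]) -> R[i]) :=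
  (forall (a : R[i]) Phi Psi, dual_elt Phi -> dual_elt Psi ->
      F (fun x => a * Phi x + Psi x) = a * F Phi + F Psi) /\
  (forall Phi0, dual_elt Phi0 -> forall e : R[i], 0 < e ->
      sdual_nbhs Phi0 (fun Phi => `|F Phi - F Phi0| < e)).

Definition sbidual_nbhs (F0 : (D -> R[i]) -> R[i])
    (W : set ((D -> R[i]) -> R[i])) :=
  exists (B : set (D -> R[i])) (e : R[i]), [/\ sdual_bounded B, 0 < e &
    forall F, bidual_elt F ->
      (forall Phi, B Phi -> `|F Phi - F0 Phi| < e) -> W F].

Definition canon (x : D) : (D -> R[i]) -> R[i] := fun Phi => Phi x.

(* D[t] is reflexive: the canonical map is a bijection of D onto the
   dual of D^x[t^x] and a homeomorphism onto it with its strong topology.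
   (Elements of D^xx are identified when they agree on D^x.) *)
Definition reflexive_tvs :=
  [/\ forall x, bidual_elt (canon x),
      forall x y : D, (forall Phi, dual_elt Phi -> Phi x = Phi y) -> x = y,
      forall F, bidual_elt F -> exists x : D,
        forall Phi, dual_elt Phi -> F Phi = Phi x,
      forall (x0 : D) W, sbidual_nbhs (canon x0) W ->
        nbhs x0 (fun x => W (canon x)) &
      forall (x0 : D) (U : set D), nbhs x0 U ->
        sbidual_nbhs (canon x0) (fun F => exists2 x, U x &
           forall Phi, dual_elt Phi -> F Phi = Phi x)].

Definition complete_tvs :=
  forall F : set_system D, ProperFilter F -> cauchy F -> exists x : D, F --> x.

Definition total_seq (xi : nat -> D) :=
  forall (x0 : D) (U : set D), nbhs x0 U ->
    exists (N : nat) (a : nat -> R[i]), U (\sum_(k < N) a k *: xi k).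

Definition bessel_like (zeta : nat -> D -> R[i]) :=
  forall M : set D, tbounded M ->
    exists c : R[i], forall x, M x ->
      forall N : nat, \sum_(k < N) `|zeta k x| ^+ 2 <= c.

Variables (H : lmodType R[i]) (ip : H -> H -> R[i]) (j : D -> H).

(* D[t] c H c D^x[t^x] is a rigged Hilbert space (with D identified with
   j(D) and h in H identified with the functional eta |-> ip h (j eta)) *)
Definition rigged :=
  [/\ is_hilbert_space ip,
      forall (a : R[i]) (x y : D), j (a *: x + y) = a *: j x + j y,
      injective j,
      forall (h : H) (e : R[i]), 0 < e -> exists x : D, ip (h - j x) (h - j x) < e &
      forall (x0 : D) (e : R[i]), 0 < e ->
        nbhs x0 (fun x => ip (j x - j x0) (j x - j x0) < e)].

Definition emb (h : H) : D -> R[i] := fun x => ip h (j x).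

Definition in_CDH (S : D -> H) :=
  [/\ forall (a : R[i]) (x y : D), S (a *: x + y) = a *: S x + S y,
      forall (x0 : D) V, sdual_nbhs (emb (S x0)) V ->
        nbhs x0 (fun x => V (emb (S x))) &
      forall (x0 : D) (e : R[i]), 0 < e ->
        nbhs x0 (fun x => ip (S x - S x0) (S x - S x0) < e)].

Definition riesz_fischer_like (xi : nat -> D) :=
  forall e : nat -> H, orthonormal_basis ip e ->
    exists S : D -> H, in_CDH S /\ forall n, S (xi n) = e n.
End Rigged.

(* Main.v *)
Require Import Defs.
From HB Require Import structures.
From mathcomp Require Import all_boot all_order all_algebra.
From mathcomp Require Import all_classical all_reals all_analysis.
From mathcomp Require Import complex.
From mathcomp Require Import ring.
Import Order.TTheory GRing.Theory Num.Theory.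
Local Open Scope ring_scope.
Set Implicit Arguments. Unset Strict Implicit.


Section IP.
Variables (R : realType) (H : lmodType R[i]) (ip : H -> H -> R[i]).
Hypothesis ipH : is_inner_product ip.

Lemma ip_lin a x y z : ip (a *: x + y) z = a * ip x z + ip y z.
Proof. by case: ipH => L _ _ _; apply: L. Qed.
Lemma ip_sym x y : ip y x = (ip x y)^*.
Proof. by case: ipH => _ L _ _; apply: L. Qed.
Lemma ip_ge0 x : 0 <= ip x x.
Proof. by case: ipH => _ _ L _; apply: L. Qed.
Lemma ip_eq0 x : ip x x = 0 -> x = 0.
Proof. by case: ipH => _ _ _ L; apply: L. Qed.

Lemma ip0l z : ip 0 z = 0.
Proof.
have := ip_lin (-1) 0 0 z. by rewrite scaler0 addr0 mulN1r addNr.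
Qed.
Lemma ipDl x y z : ip (x + y) z = ip x z + ip y z.
Proof. by rewrite -{1}(scale1r x) ip_lin mul1r. Qed.
Lemma ipZl a x z : ip (a *: x) z = a * ip x z.
Proof. by rewrite -(addr0 (a *: x)) ip_lin ip0l addr0. Qed.
Lemma ipNl x z : ip (- x) z = - ip x z.
Proof. by rewrite -scaleN1r ipZl mulN1r. Qed.
Lemma ipBl x y z : ip (x - y) z = ip x z - ip y z.
Proof. by rewrite ipDl ipNl. Qed.
Lemma ip0r z : ip z 0 = 0.
Proof. by rewrite ip_sym ip0l conjC0. Qed.
Lemma ipDr x y z : ip z (x + y) = ip z x + ip z y.
Proof. by rewrite ip_sym ipDl rmorphD /= -!ip_sym. Qed.
Lemma ipZr a x z : ip z (a *: x) = a^* * ip z x.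
Proof. by rewrite ip_sym ipZl rmorphM /= -ip_sym. Qed.
Lemma ipNr x z : ip z (- x) = - ip z x.
Proof. by rewrite ip_sym ipNl rmorphN /= -ip_sym. Qed.
Lemma ipBr x y z : ip z (x - y) = ip z x - ip z y.
Proof. by rewrite ipDr ipNr. Qed.
Lemma ip_suml (I : Type) (r : seq I) (P : pred I) (F : I -> H) z :
  ip (\sum_(i <- r | P i) F i) z = \sum_(i <- r | P i) ip (F i) z.
Proof.
elim/big_rec2: _ => [|i y1 y2 _ <-]; first by rewrite ip0l.
by rewrite ipDl.
Qed.
Lemma ip_sumr (I : Type) (r : seq I) (P : pred I) (F : I -> H) z :
  ip z (\sum_(i <- r | P i) F i) = \sum_(i <- r | P i) ip z (F i).
Proof.
elim/big_rec2: _ => [|i y1 y2 _ <-]; first by rewrite ip0r.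
by rewrite ipDr.
Qed.
Lemma ip_real x : (ip x x)^* = ip x x.
Proof. exact: geC0_conj (ip_ge0 x). Qed.

Lemma bessel (e : nat -> H) N y :
  (forall k m, (k < N)%N -> (m < N)%N -> ip (e k) (e m) = (k == m)%:R) ->
  \sum_(k < N) `|ip (e k) y| ^+ 2 <= ip y y.
Proof.
move=> ortho.
set a := fun k => ip y (e k).
set p := \sum_(k < N) a k *: e k.
have Es : \sum_(k < N) `|ip (e k) y| ^+ 2 = \sum_(k < N) a k * (a k)^*.
  apply: eq_bigr => k _; rewrite normCK /a ip_sym conjCK mulrC //.
have E1 : ip y p = \sum_(k < N) a k * (a k)^*.
  rewrite /p ip_sumr; apply: eq_bigr => k _; rewrite ipZr mulrC.
  by rewrite /a.
have E2 : ip p y = \sum_(k < N) a k * (a k)^*.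
  rewrite ip_sym E1 rmorph_sum /=; apply: eq_bigr => k _.
  by rewrite rmorphM /= conjCK mulrC.
have E3 : ip p p = \sum_(k < N) a k * (a k)^*.
  rewrite /p ip_suml; apply: eq_bigr => k _.
  rewrite ipZl ip_sumr (bigD1 k) //= big1 ?addr0.
    by rewrite ipZr ortho // eqxx mulr1.
  move=> m /negbTE nm; rewrite ipZr ortho //.
  have -> : (k == m :> nat) = false by rewrite eq_sym; exact: nm.
  by rewrite !mulr0.
have := ip_ge0 (y - p).
rewrite ipBl !ipBr E1 E2 E3 Es.
by rewrite subrr subr0 subr_ge0.
Qed.

End IP.


Section CL.
Variables (R : realType) (V : lmodType R[i]) (f : V -> R[i]).
Hypothesis fL : forall (a : R[i]) x y, f (a *: x + y) = a^* * f x + f y.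
Lemma cl0 : f 0 = 0.
Proof. have := fL (-1) 0 0; by rewrite scaler0 addr0 rmorphN1 mulN1r addNr. Qed.
Lemma clD x y : f (x + y) = f x + f y.
Proof. by rewrite -{1}(scale1r x) fL rmorph1 mul1r. Qed.
Lemma clZ a x : f (a *: x) = a^* * f x.
Proof. by rewrite -(addr0 (a *: x)) fL cl0 addr0. Qed.
Lemma clN x : f (- x) = - f x.
Proof. by rewrite -scaleN1r clZ rmorphN1 mulN1r. Qed.
Lemma clB x y : f (x - y) = f x - f y.
Proof. by rewrite clD clN. Qed.
Lemma cl_sum (I : Type) (r : seq I) (P : pred I) (F : I -> V) :
  f (\sum_(i <- r | P i) F i) = \sum_(i <- r | P i) f (F i).
Proof. elim/big_rec2: _ => [|i y1 y2 _ <-]; [exact: cl0 | exact: clD]. Qed.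
End CL.

Section LIN.
Variables (R : realType) (V W : lmodType R[i]) (f : V -> W).
Hypothesis fL : forall (a : R[i]) x y, f (a *: x + y) = a *: f x + f y.
Lemma l0 : f 0 = 0.
Proof. have := fL (-1) 0 0; by rewrite scaler0 addr0 scaleN1r addNr. Qed.
Lemma lD x y : f (x + y) = f x + f y.
Proof. by rewrite -{1}(scale1r x) fL scale1r. Qed.
Lemma lZ a x : f (a *: x) = a *: f x.
Proof. by rewrite -(addr0 (a *: x)) fL l0 addr0. Qed.
Lemma lN x : f (- x) = - f x.
Proof. by rewrite -scaleN1r lZ scaleN1r. Qed.
Lemma lB x y : f (x - y) = f x - f y.
Proof. by rewrite lD lN. Qed.
Lemma l_sum (I : Type) (r : seq I) (P : pred I) (F : I -> V) :
  f (\sum_(i <- r | P i) F i) = \sum_(i <- r | P i) f (F i).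
Proof. elim/big_rec2: _ => [|i y1 y2 _ <-]; [exact: l0 | exact: lD]. Qed.
End LIN.

Section GS.
Variables (R : realType) (D : tvsType R[i]) (H : lmodType R[i])
    (ip : H -> H -> R[i]) (j : D -> H)
    (zeta : nat -> D -> R[i]) (xi : nat -> D).
Hypothesis ipH : is_inner_product ip.
Hypothesis jL : forall (a : R[i]) (x y : D), j (a *: x + y) = a *: j x + j y.
Hypothesis jI : injective j.
Hypothesis zL : forall n, conj_linear (zeta n).
Hypothesis bio : forall n k : nat, zeta n (xi k) = (n == k)%:R.

Definition dip (x y : D) := ip (j x) (j y).
Definition step (s : seq D) (x : D) : D :=
  let u := x - \sum_(k < size s) dip x (nth 0 s k) *: nth 0 s k in
  (sqrtC (dip u u))^-1 *: u.
Fixpoint gs (n : nat) : seq D :=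
  if n is n'.+1 then rcons (gs n') (step (gs n') (xi n')) else [::].
Fact gd_key : unit. Proof. exact: tt. Qed.
Definition gd : nat -> D := locked_with gd_key (fun n => step (gs n) (xi n)).
Lemma gd_unlock n : gd n = step (gs n) (xi n).
Proof. by rewrite /gd unlock. Qed.
Lemma gsE n : gs n = mkseq gd n.
Proof. elim: n => [//|n IH]; by rewrite mkseqS /= -IH gd_unlock. Qed.
Definition gu n := xi n - \sum_(k < n) dip (xi n) (gd k) *: gd k.
Lemma gdE n : gd n = (sqrtC (dip (gu n) (gu n)))^-1 *: gu n.
Proof.
rewrite gd_unlock /step /gu gsE size_mkseq.
congr (_ *: (_ - _)); [congr (_^-1); congr sqrtC; congr dip; congr (_ - _)|];
  by apply: eq_bigr => k _; rewrite nth_mkseq.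
Qed.

Lemma zeta_gu m n : (forall k, (k < n)%N -> zeta m (gd k) = 0) ->
  zeta m (gu n) = (m == n)%:R.
Proof.
move=> h; rewrite /gu (clB (zL m)) (cl_sum (zL m)) big1 ?subr0 //.
by move=> k _; rewrite (clZ (zL m)) h // mulr0.
Qed.

Lemma gu_neq0 n : (forall k, (k < n)%N -> zeta n (gd k) = 0) -> gu n != 0.
Proof.
move=> h; apply/negP => /eqP E; have := zeta_gu h.
by rewrite E (cl0 (zL n)) eqxx => /eqP; rewrite eq_sym oner_eq0.
Qed.

Lemma dip_gt0 x : x != 0 -> 0 < dip x x.
Proof.
move=> nx; rewrite lt_def (ip_ge0 ipH) andbT; apply/negP => /eqP E.
move: nx; have := ip_eq0 ipH E; rewrite -(l0 jL) => /jI ->; by rewrite eqxx.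
Qed.

Lemma gs_props n :
  [/\ forall m, (n < m)%N -> zeta m (gd n) = 0,
      dip (gd n) (gd n) = 1 &
      forall k, (k < n)%N -> dip (gd n) (gd k) = 0].
Proof.
elim/ltn_ind: n => n IH.
have hA : forall k, (k < n)%N -> forall m, (n <= m)%N -> zeta m (gd k) = 0.
  move=> k kn m nm; have [A _ _] := IH k kn; apply: A; exact: leq_trans kn nm.
have nu := gu_neq0 (fun k kn => hA k kn n (leqnn n)).
have pos := dip_gt0 nu.
set c := (sqrtC (dip (gu n) (gu n)))^-1.
have cpos : 0 < c by rewrite invr_gt0 sqrtC_gt0.
have cc : c^* = c by rewrite geC0_conj // ltW.
split.
- move=> m nm; rewrite gdE -/c (clZ (zL m)) zeta_gu; last first.
    move=> k kn; apply: hA => //; exact: ltnW.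
  by rewrite (gtn_eqF nm) mulr0.
- rewrite gdE -/c /dip (lZ jL) ipZl // ipZr // mulrA cc -expr2.
  by rewrite /c exprVn sqrtCK mulVf // gt_eqF.
- move=> k kn; rewrite /dip (gdE n) -/c (lZ jL) (ipZl ipH).
  rewrite /gu (lB jL) (ipBl ipH) (l_sum jL) (ip_suml ipH).
  rewrite (bigD1 (Ordinal kn)) // big1 ?addr0.
    have [_ E2 _] := IH k kn.
    rewrite (lZ jL) (ipZl ipH) -/(dip (gd k) (gd k)) E2 mulr1 /= addr0 -/(dip (xi n) (gd k)) subrr mulr0 //.
  move=> l /andP[_ /eqP nl]; rewrite (lZ jL) (ipZl ipH).
  have ln : (l < n)%N by [].
  have [kl|lk|e] := ltngtP k l.
  - by have [_ _ E3] := IH l ln; rewrite -/(dip (gd l) (gd k)) E3 ?mulr0.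
  - have [_ _ E3] := IH k kn.
    by rewrite (ip_sym ipH) -/(dip (gd k) (gd l)) E3 ?conjC0 ?mulr0.
  - by exfalso; apply: nl; apply: val_inj.
Qed.

Lemma gs_span (x : H) n : (forall k, ip x (j (gd k)) = 0) -> ip x (j (xi n)) = 0.
Proof.
move=> h.
have nu : gu n != 0 by apply: gu_neq0 => k kn; have [A _ _] := gs_props k; exact: A.
have pos := dip_gt0 nu.
set c := (sqrtC (dip (gu n) (gu n)))^-1.
have cpos : 0 < c by rewrite invr_gt0 sqrtC_gt0.
have := h n; rewrite gdE -/c (lZ jL) ipZr // => /eqP.
rewrite mulf_eq0 conjC_eq0 (gt_eqF cpos) /= /gu (lB jL) ipBr // (l_sum jL) ip_sumr //.
rewrite big1 ?subr0; first by move/eqP.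
by move=> k _; rewrite (lZ jL) ipZr // h mulr0.
Qed.
End GS.


Lemma sq_lt (R : realType) (a b : R[i]) : 0 <= b -> `|a| ^+ 2 < b ^+ 2 -> `|a| < b.
Proof.
move=> b0 h; rewrite real_ltNge ?normr_real ?ger0_real //; apply/negP => ba.
have := lerXn2r 2 (x:=b) (y:=`|a|); rewrite !nnegrE b0 normr_ge0 => /(_ isT isT ba).
by rewrite real_leNgt ?realX ?normr_real ?ger0_real ?h.
Qed.
Lemma dummy : True. Proof. by [].
Qed.

Lemma par_ineq (R : realType) (H : lmodType R[i]) (ip : H -> H -> R[i])
  (ipH : is_inner_product ip) (a b : H) :
  ip (a + b) (a + b) <= 2 * ip a a + 2 * ip b b.
Proof.
have E : ip (a + b) (a + b) + ip (a - b) (a - b) = 2 * ip a a + 2 * ip b b.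
  rewrite !(ipDl ipH) !(ipNl ipH) !(ipDr ipH) !(ipNr ipH).
  ring.
rewrite -E lerDl; exact: ip_ge0.
Qed.

Unset Implicit Arguments.
Theorem proposition2p17 (R : realType) (D : tvsType R[i]) (H : lmodType R[i])
    (ip : H -> H -> R[i]) (j : D -> H)
    (zeta : nat -> D -> R[i]) (xi : nat -> D) :
  rigged ip j ->
  complete_tvs D ->
  reflexive_tvs D ->
  (forall n, dual_elt (zeta n)) ->
  (forall n k : nat, zeta n (xi k) = (n == k)%:R) ->
  total_seq xi ->
  riesz_fischer_like ip j xi ->
  bessel_like zeta.
Proof.
move=> [[ipH _] jL jI jdense jcont] _ _ zD bio tot RF.
have zL : forall n, conj_linear (zeta n) by move=> n; case: (zD n).
set e := fun n => j (gd ip j xi n).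
have orth : forall n m, ip (e n) (e m) = (n == m)%:R.
  move=> n m; rewrite /e; have [lt|gt|->] := ltngtP n m.
  - have [_ _ E3] := gs_props ipH jL jI zL bio m.
    by rewrite (ip_sym ipH) -/(dip ip j _ _) E3 // conjC0.
  - by have [_ _ E3] := gs_props ipH jL jI zL bio n; rewrite -/(dip ip j _ _) E3.
  - by have [_ E2 _] := gs_props ipH jL jI zL bio m; rewrite -/(dip ip j _ _) E2 ?eqxx.
have ONB : orthonormal_basis ip e.
  split => // x hx.
  have hxi : forall n, ip x (j (xi n)) = 0.
    move=> n; apply: (gs_span ipH jL jI zL bio) => k; exact: hx.
  have hspan : forall N (a : nat -> R[i]), ip x (j (\sum_(k < N) a k *: xi k)) = 0.
    move=> N a; rewrite (l_sum jL) (ip_sumr ipH) big1 // => k _.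
    by rewrite (lZ jL) (ipZr ipH) hxi mulr0.
  have small : forall eps : R[i], 0 < eps -> ip x x < eps.
    move=> eps eps0.
    have e4 : 0 < eps / 4 by rewrite divr_gt0 // ltr0n.
    have [y hy] := jdense x _ e4.
    have [N [a ha]] := tot y _ (jcont y _ e4).
    set s := \sum_(k < N) a k *: xi k in ha.
    have h1 : ip x x <= ip (x - j s) (x - j s).
      have hs : ip x (j s) = 0 := hspan N a.
      have hs' : ip (j s) x = 0 by rewrite (ip_sym ipH) hs conjC0.
      rewrite (ipBl ipH) !(ipBr ipH) (_ : ip x (j s) = 0) // (_ : ip (j s) x = 0) //.
      by rewrite !subr0 sub0r opprK lerDl (ip_ge0 ipH).
    apply: (le_lt_trans h1).
    have -> : x - j s = (x - j y) + (j y - j s) by rewrite addrA subrK.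
    apply: (le_lt_trans (par_ineq ipH _ _)).
    have -> : ip (j y - j s) (j y - j s) = ip (j s - j y) (j s - j y).
      by rewrite -opprB (ipNl ipH) (ipNr ipH) opprK.
    have -> : eps = 2 * (eps / 4) + 2 * (eps / 4).
      by rewrite -mulrDl -natrD mulrC divfK // pnatr_eq0.
    by apply: ltrD; rewrite ltr_pM2l // ltr0n.
  apply: (ip_eq0 ipH); apply/eqP; apply: contraT => nz.
  have pos : 0 < ip x x by rewrite lt_def nz (ip_ge0 ipH).
  by have := small _ pos; rewrite ltxx.
have [S [[SL _ Scont] Se]] := RF e ONB.
have S0 : S 0 = 0 := l0 SL.
have claim : forall n eta, zeta n eta = ip (e n) (S eta).
  move=> n eta; set f := fun y => zeta n y - ip (e n) (S y).
  have fspan : forall N a, f (\sum_(k < N) a k *: xi k) = 0.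
    move=> N a; rewrite /f (cl_sum (zL n)) (l_sum SL) (ip_sumr ipH) -sumrB big1 // => k _.
    by rewrite (clZ (zL n)) (lZ SL) (ipZr ipH) Se orth bio subrr.
  apply/eqP; rewrite -subr_eq0 -/(f eta); apply: contraT => nz.
  set eps := `|f eta|.
  have eps0 : 0 < eps by rewrite normr_gt0.
  have h2 : 0 < eps / 2 by rewrite divr_gt0 // ltr0n.
  have [_ zc] := zD n.
  have N1 := zc eta (eps / 2) h2.
  have N2 := Scont eta ((eps / 2) ^+ 2) (exprn_gt0 2 h2).
  have [N [a [h1 h3]]] := tot eta _ (filterI N1 N2).
  set s := \sum_(k < N) a k *: xi k in h1 h3.
  have bes : `|ip (e n) (S s - S eta)| < eps / 2.
    apply: sq_lt; first exact: ltW.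
    apply: le_lt_trans h3.
    have := @bessel _ _ _ ipH (fun _ => e n) 1 (S s - S eta).
    rewrite big_ord1; apply.
    by move=> k m; rewrite !ltnS !leqn0 => /eqP-> /eqP->; rewrite orth !eqxx.
  have fs : f s = 0 := fspan N a.
  have : eps < eps.
    rewrite {1}/eps (_ : f eta = (zeta n eta - zeta n s) - (ip (e n) (S eta) - ip (e n) (S s))); last first.
      by rewrite -[f eta]subr0 -fs /f; ring.
    apply: (le_lt_trans (ler_normB _ _)).
    rewrite (splitr eps); apply: ltrD.
      by rewrite distrC.
    by rewrite distrC -(ipBr ipH).
  by rewrite ltxx.
move=> M Mb.
have [r [r0 hr]] := Mb _ (Scont 0 1 ltr01).
exists (r ^+ 2) => x Mx N.
have rr : r <= `|r| by rewrite ger0_norm // ltW.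
have [u Uu <-] := hr r rr x Mx.
rewrite S0 subr0 in Uu.
rewrite (eq_bigr (fun k : 'I_N => `|ip (e k) (S (r *: u))| ^+ 2)); last first.
  by move=> k _; rewrite claim.
apply: le_trans (@bessel _ _ _ ipH e N (S (r *: u)) _) _.
  by move=> k m _ _; exact: orth.
rewrite (lZ SL) (ipZl ipH) (ipZr ipH) mulrA (geC0_conj (ltW r0)) -expr2.
by rewrite ler_piMr ?exprn_ge0 ?ltW.
Qed.
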